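(* There is an absolute constant $c>0$ such that for every sum-bucket game on a simple graph with $n\ge2$ nodes whose strategy paths are all simple, and every optimal routing $\mathbf p^*$ with $\overline C^*=\overline C(\mathbf p^* )$, $\overline D^*=\overline D(\mathbf p^* )$, the price of anarchy satisfies $$PoA\le c\cdot\frac{\overline C^*\cdot\overline D^*}{\overline C^*+\overline D^*}\cdot\lg^2 n.$$
   Context: A routing game $(\mathbf N,G,\mathcal P)$: players $\{1,\dots,N\}$ ($N\ge1$), a simple graph $G$ with $n$ nodes, and for each player $i$ a nonempty finite set $\mathcal P_i$ of simple paths (each with at least one edge) from $u_i$ to $v_i$; $\mathcal P=\bigcup_i\mathcal P_i$, $L=\max_{p\in\mathcal P}|p|$ (number of edges). A routing is $\mathbf p=[p_1,\dots,p_N]$, $p_i\in\mathcal P_i$. Sum-bucket game: for $k=0,\dots,\lceil\lg L\rceil$ bucket $B_k$ = paths in $\mathcal P$ with length in $[2^k,2^{k+1})$, $B(q)$ = bucket index of $q$; normalized length $\overline D_q=2^{B(q)+1}-1$; $\overline C_{e,q}(\mathbf p)$ = number of players $j$ with $e\in p_j$ and $B(p_j)=B(q)$; $\overline C_q(\mathbf p)=\max_{e\in q}\overline C_{e,q}(\mathbf p)$; $\overline C_i=\overline C_{p_i}$, $\overline D_i=\overline D_{p_i}$; player cost $pc_i=\overline C_i+\overline D_i$; $\overline C(\mathbf p)=\max_i\overline C_i$, $\overline D(\mathbf p)=\max_i\overline D_i$; social cost $SC(\mathbf p)=\overline C(\mathbf p)+\overline D(\mathbf p)$. A Nash-routing: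 no player can strictly lower its cost by unilaterally changing its path within $\mathcal P_i$; an optimal routing minimizes $SC$, with value $SC^*$. $PoA=\sup_{\mathbf p}SC(\mathbf p)/SC^*$ over all Nash-routings $\mathbf p$ (which exist). $\lg=\log_2$. *)

(* Defs.v *)
From mathcomp Require Import all_boot.
Set Implicit Arguments. Unset Strict Implicit. Unset Printing Implicit Defensive.

Section RoutingGame.
Variables (n N : nat).

Definition pth := seq 'I_n.

Definition plen (q : pth) : nat := (size q).-1.

Definition pedges (q : pth) : seq ('I_n * 'I_n) := zip q (behead q).

Definition edge_in (e : 'I_n * 'I_n) (q : pth) : bool :=
  (e \in pedges q) || ((e.2, e.1) \in pedges q).

Definition simple_path (G : rel 'I_n) (u v : 'I_n) (q : pth) : bool :=
  [&& 1 < size q, uniq q, path G (head u q) (behead q),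
      head u q == u & last u q == v].

Definition simple_graph (G : rel 'I_n) : Prop := symmetric G /\ irreflexive G.

Definition bucket (q : pth) : nat := trunc_log 2 (plen q).

Definition Dbar (q : pth) : nat := 2 ^ (bucket q).+1 - 1.

Definition Cbar_e (p : 'I_N -> pth) (e : 'I_n * 'I_n) (q : pth) : nat :=
  #|[pred j : 'I_N | edge_in e (p j) && (bucket (p j) == bucket q)]|.

Definition Cbar (p : 'I_N -> pth) (q : pth) : nat :=
  \max_(e <- pedges q) Cbar_e p e q.

Definition pc (p : 'I_N -> pth) (i : 'I_N) : nat := Cbar p (p i) + Dbar (p i).

Definition Cmax (p : 'I_N -> pth) : nat := \max_(i < N) Cbar p (p i).
Definition Dmax (p : 'I_N -> pth) : nat := \max_(i < N) Dbar (p i).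
Definition SC (p : 'I_N -> pth) : nat := Cmax p + Dmax p.

Definition upd (p : 'I_N -> pth) (i : 'I_N) (q : pth) : 'I_N -> pth :=
  fun j => if j == i then q else p j.

Definition routing (P : 'I_N -> seq pth) (p : 'I_N -> pth) : Prop :=
  forall i, p i \in P i.

Definition nash (P : 'I_N -> seq pth) (p : 'I_N -> pth) : Prop :=
  routing P p /\
  forall i q, q \in P i -> pc p i <= pc (upd p i q) i.

Definition optimal (P : 'I_N -> seq pth) (p : 'I_N -> pth) : Prop :=
  routing P p /\ forall p', routing P p' -> SC p <= SC p'.

Definition valid_game (G : rel 'I_n) (u v : 'I_N -> 'I_n) (P : 'I_N -> seq pth)
  : Prop :=
  simple_graph G /\
  forall i, P i != [::] /\ forall q, q \in P i -> simple_path G (u i) (v i) q.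

End RoutingGame.

(* Main.v *)
Require Import Defs.
From mathcomp Require Import all_boot.
From Stdlib Require Import Reals Lia Lra Psatz.
Set Implicit Arguments. Unset Strict Implicit.

Ltac nlia := intros; rewrite ?ltnS; repeat match goal with
 | H : is_true (_ <= _) |- _ => move/leP: H => H
 | H : is_true (_ < _) |- _ => move/ltP: H => H
 | H : context [addn] |- _ => rewrite -?plusE in H
 | H : context [subn] |- _ => rewrite -?minusE in H
 | H : context [muln] |- _ => rewrite -?multE in H
 end; rewrite -?plusE -?minusE -?multE; (apply/leP || apply/ltP || idtac); lia.

Definition cw n N (r : 'I_N -> pth n) (x : ('I_n * 'I_n) * 'I_n) : nat :=
  #|[pred j : 'I_N | edge_in x.1 (r j) && (bucket (r j) == x.2)]|.

Lemma edge_in_swap n (e : 'I_n * 'I_n) q : edge_in (e.2, e.1) q = edge_in e q.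
Proof. by case: e => a b; rewrite /edge_in /= orbC. Qed.

Lemma Cbar_e_swap n N (r : 'I_N -> pth n) e q : Cbar_e r (e.2, e.1) q = Cbar_e r e q.
Proof. by rewrite /Cbar_e; apply: eq_card => j; rewrite !inE edge_in_swap. Qed.

Lemma Cbar_e_le n N (r : 'I_N -> pth n) e q : edge_in e q -> Cbar_e r e q <= Cbar r q.
Proof.
case/orP => H.
  exact: (leq_bigmax_seq (F := fun e => Cbar_e r e q) e H isT).
rewrite -Cbar_e_swap.
exact: (leq_bigmax_seq (F := fun e => Cbar_e r e q) _ H isT).
Qed.

Lemma card_le_Cmax n N (r : 'I_N -> pth n) e (k : nat) :
  #|[pred j : 'I_N | edge_in e (r j) && (bucket (r j) == k)]| <= Cmax r.
Proof.
case: (pickP [pred j : 'I_N | edge_in e (r j) && (bucket (r j) == k)]) => [j Hj|H0].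
  move: (Hj); rewrite /= => /andP [He /eqP Hk].
  have -> : #|[pred j : 'I_N | edge_in e (r j) && (bucket (r j) == k)]| = Cbar_e r e (r j).
    by rewrite /Cbar_e Hk.
  apply: leq_trans (Cbar_e_le r He) _.
  exact: (leq_bigmax (F := fun i => Cbar r (r i)) j).
by rewrite eq_card0.
Qed.

Lemma cw_le_Cmax n N (r : 'I_N -> pth n) x : cw r x <= Cmax r.
Proof. exact: card_le_Cmax. Qed.

Lemma Cbar_le_M n N (r : 'I_N -> pth n) q (Hb : bucket q < n) :
  Cbar r q <= \max_x cw r x.
Proof.
apply/bigmax_leqP_seq => e _ _.
have -> : Cbar_e r e q = cw r (e, Ordinal Hb) by [].
exact: (leq_bigmax (F := cw r)).
Qed.

Lemma upd_le n N (p : 'I_N -> pth n) i q e q' :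
  Cbar_e (upd p i q) e q' <= Cbar_e p e q' + 1.
Proof.
rewrite /Cbar_e (cardD1 i) addnC; apply: leq_add; last exact: leq_b1.
apply: subset_leq_card; apply/subsetP => j; rewrite !inE /upd.
by case/andP => /negbTE -> .
Qed.

Lemma Cbar_upd_le n N (p : 'I_N -> pth n) i q (Hb : bucket q < n) :
  Cbar (upd p i q) q <= \max_x cw p x + 1.
Proof.
apply/bigmax_leqP_seq => e _ _.
apply: leq_trans (upd_le p i q e q) _.
rewrite leq_add2r.
have -> : Cbar_e p e q = cw p (e, Ordinal Hb) by [].
exact: (leq_bigmax (F := cw p)).
Qed.
Lemma plen_le_Dbar n (q : pth n) : plen q <= Dbar q.
Proof.
rewrite /Dbar /bucket.
have := trunc_log_ltn (plen q) (isT : 1 < 2). nlia.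
Qed.

Lemma Dbar_ge1 n (q : pth n) : 1 <= Dbar q.
Proof. rewrite /Dbar expnS. have : 0 < expn 2 (bucket q) by rewrite expn_gt0. nlia. Qed.

Lemma bucket_lt n G (u v : 'I_n) (q : pth n) : simple_path G u v q -> bucket q < n /\ 0 < plen q.
Proof.
case/and5P => Hs Hu _ _ _.
have Hsz : size q <= n by rewrite -(card_uniqP Hu); apply: leq_trans (max_card _) _; rewrite card_ord.
have Hb : bucket q <= plen q.
  rewrite /bucket; case: (posnP (plen q)) => [->|Hp]; first by rewrite trunc_log0.
  have := trunc_logP (isT : 1 < 2) Hp. have := ltn_expl (trunc_log 2 (plen q)) (isT : 1 < 2).
  nlia.
rewrite /plen in Hb *. split; nlia.
Qed.

Lemma sum_mem (T : finType) (s : seq T) : \sum_(x : T) ((x \in s) : nat) <= size s.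
Proof.
apply: leq_trans (card_size s).
rewrite -sum1_card [X in _ <= X]big_mkcond /=; apply: leq_sum => x _; by case: (x \in s).
Qed.

Lemma sum_edge_in n (q : pth n) : \sum_(e : 'I_n * 'I_n) (edge_in e q : nat) <= 2 * plen q.
Proof.
have Hsz : size (pedges q) = plen q.
  by rewrite /pedges size_zip size_behead /plen; apply/minn_idPr; exact: leq_pred.
apply: (@leq_trans (\sum_(e : 'I_n * 'I_n) (((e \in pedges q) : nat) + (((e.2, e.1) \in pedges q) : nat)))).
  apply: leq_sum => e _; rewrite /edge_in; by case: (e \in pedges q); case: (_ \in _).
rewrite big_split /= mul2n -addnn -{1 2}Hsz; apply: leq_add; first exact: sum_mem.
set sw := fun e : 'I_n * 'I_n => (e.2, e.1).
have swK : involutive sw by case.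
have swI : injective sw := inv_inj swK.
apply: (@leq_trans (\sum_(e : 'I_n * 'I_n) ((e \in map sw (pedges q)) : nat))).
  apply: leq_sum => e _. by rewrite -(mem_map swI) swK.
by apply: leq_trans (sum_mem _) _; rewrite size_map.
Qed.
Lemma card_sumb (T : finType) (P : pred T) : #|P| = \sum_x (P x : nat).
Proof. rewrite -sum1_card big_mkcond; apply: eq_bigr => x _ /=. by rewrite -topredE /=; case: (P x). Qed.

Lemma updE n N (p : 'I_N -> pth n) i q : upd p i q i = q.
Proof. by rewrite /upd eqxx. Qed.

Lemma witness n N (p pstar : 'I_N -> pth n) j t :
  0 < plen (pstar j) ->
  t <= Cbar (upd p j (pstar j)) (pstar j) + Dmax pstar ->
  exists2 e, e \in pedges (pstar j) & t <= Cbar_e p e (pstar j) + 1 + Dmax pstar.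
Proof.
move=> Hpl Ht.
case: (boolP (has (fun e => t <= Cbar_e p e (pstar j) + 1 + Dmax pstar) (pedges (pstar j)))) => [/hasP [e He Hle] | Hn]; first by exists e.
exfalso; move/hasPn: Hn => Hn.
have Hsz : size (pedges (pstar j)) = plen (pstar j).
  by rewrite /pedges size_zip size_behead /plen; apply/minn_idPr; exact: leq_pred.
have [e0 He0] : exists e0, e0 \in pedges (pstar j).
  move: Hsz Hpl; case: (pedges (pstar j)) => [<-//|e0 s] _ _; exists e0; by rewrite inE eqxx.
have Hx := Hn e0 He0; rewrite /= -ltnNge in Hx.
have Hmax : Cbar (upd p j (pstar j)) (pstar j) <= t - (Dmax pstar + 1).
  apply/bigmax_leqP_seq => e He _.
  have := Hn e He; rewrite /= -ltnNge => H1.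
  have := upd_le p j (pstar j) e (pstar j). nlia.
nlia.
Qed.

Lemma pc_upd_le n N (p pstar : 'I_N -> pth n) j :
  bucket (pstar j) < n ->
  pc (upd p j (pstar j)) j <= \max_x cw p x + 1 + Dmax pstar.
Proof.
move=> Hb; rewrite /pc updE; apply: leq_add; first exact: Cbar_upd_le.
exact: (leq_bigmax (F := fun i => Dbar (pstar i)) j).
Qed.

Lemma pc_upd_le' n N (p pstar : 'I_N -> pth n) j :
  pc (upd p j (pstar j)) j <= Cbar (upd p j (pstar j)) (pstar j) + Dmax pstar.
Proof.
rewrite /pc updE leq_add2l.
exact: (leq_bigmax (F := fun i => Dbar (pstar i)) j).
Qed.

Lemma hot_C n N (p : 'I_N -> pth n) (x : ('I_n * 'I_n) * 'I_n) j :
  edge_in x.1 (p j) && (bucket (p j) == x.2) -> cw p x <= Cbar p (p j).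
Proof.
case/andP => He /eqP Hk.
have -> : cw p x = Cbar_e p x.1 (p j) by rewrite /cw /Cbar_e Hk.
exact: Cbar_e_le.
Qed.

Lemma sum_k_le n (b : bool) (B : nat) : B < n -> \sum_(k < n) ((b && (B == k)) : nat) <= b.
Proof.
move=> HB; case: b; last by rewrite big1.
rewrite (bigD1 (Ordinal HB)) //= eqxx big1 // => k /negbTE Hk.
case: eqP => // Hbk; exfalso.
have Hk' : k = Ordinal HB by apply: val_inj.
by rewrite Hk' eqxx in Hk.
Qed.
Lemma recur n N (p pstar : 'I_N -> pth n)
  (Hb : forall j, bucket (p j) < n) (Hbs : forall j, bucket (pstar j) < n)
  (Hpl : forall j, 0 < plen (pstar j))
  (Hnash : forall j, pc p j <= pc (upd p j (pstar j)) j) (t : nat) :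
  t * #|[pred x | t <= cw p x]| <=
  2 * (\max_x cw p x + (Dmax pstar + 1) - t) *
  (Cmax pstar * #|[pred x | t - (Dmax pstar + 1) <= cw p x]|).
Proof.
set M := \max_x cw p x; set L := Dmax pstar.
set A := [pred x | t <= cw p x]; set A' := [pred x | t - (L + 1) <= cw p x].
set K := 2 * (M + (L + 1) - t).
pose inc (x : ('I_n * 'I_n) * 'I_n) (j : 'I_N) := edge_in x.1 (p j) && (bucket (p j) == x.2).
pose hot j := [exists x, (x \in A) && inc x j].
have HhotC : forall j, hot j -> t <= Cbar p (p j).
  move=> j /existsP [x /andP [Hx Hi]].
  by apply: leq_trans (hot_C Hi); move: Hx; rewrite inE.
have Hpc : forall j, pc p j <= M + 1 + L.
  by move=> j; apply: leq_trans (Hnash j) (pc_upd_le p (Hbs j)).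
have Step1 : t * #|A| <= \sum_(x in A) \sum_j (inc x j : nat).
  rewrite mulnC -sum_nat_const; apply: leq_sum => x Hx.
  rewrite -card_sumb; by move: Hx; rewrite inE.
apply: leq_trans Step1 _; rewrite exchange_big /=.
have Step4 : forall j, \sum_(x in A) (inc x j : nat) <= hot j * K.
  move=> j; case: (boolP (hot j)) => Hh; last first.
    rewrite big1 // => x Hx; move/existsPn: Hh => /(_ x); rewrite Hx /=.
    by move/negbTE => ->.
  rewrite mul1n.
  apply: (@leq_trans (\sum_x (inc x j : nat))).
    rewrite [X in _ <= X](bigID (mem A)) /=; exact: leq_addr.
  rewrite -(pair_bigA _ (fun e (k : 'I_n) => (edge_in e (p j) && (bucket (p j) == k) : nat))) /=.
  apply: (@leq_trans (\sum_e (edge_in e (p j) : nat))).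
    by apply: leq_sum => e _; apply: sum_k_le.
  apply: leq_trans (sum_edge_in (p j)) _.
  have := plen_le_Dbar (p j); have := HhotC j Hh; have := Hpc j; rewrite /pc /K.
  nlia.
apply: (@leq_trans (\sum_j (hot j * K))); first by apply: leq_sum => j _; apply: Step4.
rewrite -big_distrl /= mulnC leq_mul2l; apply/orP; right.
pose incs (x : ('I_n * 'I_n) * 'I_n) (j : 'I_N) := edge_in x.1 (pstar j) && (bucket (pstar j) == x.2).
apply: (@leq_trans (\sum_j \sum_(x in A') (incs x j : nat))).
  apply: leq_sum => j _; case: (boolP (hot j)) => Hh //=.
  have Ht : t <= Cbar (upd p j (pstar j)) (pstar j) + L.
    have := HhotC j Hh; have := Hnash j; have := pc_upd_le' p pstar j; rewrite /pc /L; nlia.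
  have [e He Hle] := witness (Hpl j) Ht.
  pose x0 := (e, Ordinal (Hbs j)) : ('I_n * 'I_n) * 'I_n.
  have Hx0 : x0 \in A'.
    rewrite inE; have -> : cw p x0 = Cbar_e p e (pstar j) by []. move: Hle; rewrite /L; nlia.
  rewrite (bigD1 x0) //=; apply: leq_trans (leq_addr _ _).
  by rewrite /incs /= eqxx andbT /edge_in He.
rewrite exchange_big /= mulnC -sum_nat_const; apply: leq_sum => x _.
rewrite -card_sumb; exact: cw_le_Cmax.
Qed.
Ltac nnia := intros; rewrite ?ltnS; repeat match goal with
 | H : is_true (_ <= _) |- _ => move/leP: H => H
 | H : is_true (_ < _) |- _ => move/ltP: H => H
 | H : context [addn] |- _ => rewrite -?plusE in H
 | H : context [subn] |- _ => rewrite -?minusE in H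
 | H : context [muln] |- _ => rewrite -?multE in H
 end; rewrite -?plusE -?minusE -?multE; (apply/leP || apply/ltP || idtac); nia.

Lemma iter_bound (f : nat -> nat) (M a C B S : nat) :
  0 < a -> 0 < C -> 1 <= f M -> (forall t, f t <= B) -> B < expn 2 S ->
  (forall t, t * f t <= 2 * (M + a - t) * (C * f (t - a))) ->
  M < 5 * S * a * C.
Proof.
move=> Ha HC H0 HB HS Hrec; rewrite ltnNge; apply/negP => HM.
have key : forall s, s <= S -> expn 2 s <= f (M - s * a).
  elim=> [_|s IH Hs]; first by rewrite mul0n subn0.
  have IH' := IH (ltnW Hs).
  have F1 : s * a <= S * a * C.
    apply: (@leq_trans (S * a)); first by rewrite leq_mul2r ltnW ?orbT.
    by rewrite leq_pmulr.
  have F2 : (s + 1) * a * C <= S * a * C by rewrite addn1 !leq_mul2r Hs !orbT.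
  have F3 : 5 * S * a * C = 5 * (S * a * C) by rewrite !mulnA.
  rewrite F3 in HM.
  have Hsa : s * a <= M by nlia.
  have Ht : 4 * ((s + 1) * a * C) <= M - s * a by nlia.
  have Hr := Hrec (M - s * a).
  have E1 : M + a - (M - s * a) = (s + 1) * a by nnia.
  have E2 : M - s * a - a = M - s.+1 * a by nnia.
  rewrite E1 E2 in Hr.
  set g := f (M - s.+1 * a) in Hr *; set ft := f (M - s * a) in Hr Ht IH'.
  have H1 : 4 * ((s + 1) * a * C) * ft <= (M - s * a) * ft by rewrite leq_mul2r Ht orbT.
  have H2 : 2 * ft <= g.
    set Y := (s + 1) * a * C in H1.
    have HY : 0 < Y by rewrite /Y !muln_gt0 addn1 Ha HC.
    have H3 : 4 * Y * ft <= 2 * Y * g.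
      apply: leq_trans H1 (leq_trans Hr _). by rewrite /Y !mulnA.
    rewrite -(leq_pmul2l (isT : 0 < 2)) -(leq_pmul2l HY).
    move: H3; rewrite !mulnA (mulnC Y 2) (mulnC (2 * Y) 2) !mulnA.
    by [].
  by rewrite expnS; apply: leq_trans H2; rewrite leq_mul2l IH'.
have := key S (leqnn S); have := HB (M - S * a). nlia.
Qed.
Lemma nat_main n N (Hn : 2 <= n) (HN : 1 <= N) (G : rel 'I_n) (u v : 'I_N -> 'I_n)
  (P : 'I_N -> seq (seq 'I_n)) (Hv : valid_game G u v P)
  (pstar : 'I_N -> seq 'I_n) (Ho : optimal P pstar)
  (p : 'I_N -> seq 'I_n) (Hna : nash P p) :
  [/\ 1 <= Cmax pstar, 1 <= Dmax pstar &
      SC p <= 122 * (trunc_log 2 n * Dmax pstar * Cmax pstar)].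
Proof.
have Hsp : forall j, simple_path G (u j) (v j) (p j).
  by move=> j; apply: ((Hv.2 j).2); apply: Hna.1.
have Hsps : forall j, simple_path G (u j) (v j) (pstar j).
  by move=> j; apply: ((Hv.2 j).2); apply: Ho.1.
have Hb : forall j, bucket (p j) < n by move=> j; case: (bucket_lt (Hsp j)).
have Hbs : forall j, bucket (pstar j) < n by move=> j; case: (bucket_lt (Hsps j)).
have Hpl : forall j, 0 < plen (pstar j) by move=> j; case: (bucket_lt (Hsps j)).
have Hnash : forall j, pc p j <= pc (upd p j (pstar j)) j.
  by move=> j; apply: Hna.2; apply: Ho.1.
set j0 : 'I_N := Ordinal HN.
set L := Dmax pstar; set Cs := Cmax pstar; set T := trunc_log 2 n.
have HL : 1 <= L.
  apply: leq_trans (Dbar_ge1 (pstar j0)) _.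
  exact: (leq_bigmax (F := fun i => Dbar (pstar i)) j0).
have HC : 1 <= Cs.
  have Hsz : size (pedges (pstar j0)) = plen (pstar j0).
    by rewrite /pedges size_zip size_behead /plen; apply/minn_idPr; exact: leq_pred.
  have [e0 He0] : exists e0, e0 \in pedges (pstar j0).
    move: Hsz (Hpl j0); case: (pedges (pstar j0)) => [<-//|e0 s] _ _; exists e0; by rewrite inE eqxx.
  have He : edge_in e0 (pstar j0) by rewrite /edge_in He0.
  apply: leq_trans (leq_trans (Cbar_e_le pstar He) (leq_bigmax (F := fun i => Cbar pstar (pstar i)) j0)).
  by apply/card_gt0P; exists j0; rewrite inE He eqxx.
have HT : 1 <= T by apply: trunc_log_max.
split => //.
set M := \max_x cw p x.
have HM : M < 5 * (3 * T.+1) * (L + 1) * Cs.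
  apply: (@iter_bound (fun t => #|[pred x | t <= cw p x]|) M (L + 1) Cs (n * n * n)).
  - by rewrite addn1.
  - exact: HC.
  - have Hpos : 0 < #|{: ('I_n * 'I_n) * 'I_n}| by rewrite !card_prod !card_ord !muln_gt0 (ltnW Hn).
    have [x0 Hx0] := eq_bigmax (cw p) Hpos.
    by apply/card_gt0P; exists x0; rewrite inE /M Hx0.
  - move=> t; apply: leq_trans (max_card _) _; by rewrite !card_prod !card_ord.
  - have Hlt := trunc_log_ltn n (isT : 1 < 2); rewrite -/T in Hlt.
    have -> : 3 * T.+1 = T.+1 + T.+1 + T.+1 by rewrite !mulSn mul0n addn0 addnA.
    by rewrite !expnD; apply: ltn_mul => //; apply: ltn_mul.
  - move=> t; exact: (recur Hb Hbs Hpl Hnash t).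
have HCp : Cmax p <= M by apply/bigmax_leqP => i _; apply: Cbar_le_M.
have HDp : Dmax p <= M + 1 + L.
  apply/bigmax_leqP => i _; apply: leq_trans (leq_addl (Cbar p (p i)) _) _.
  exact: leq_trans (Hnash i) (pc_upd_le p (Hbs i)).
set W := T.+1 * (L + 1) * Cs.
set Z := T * L * Cs.
have E1 : 5 * (3 * T.+1) * (L + 1) * Cs = 15 * W by rewrite /W !mulnA.
have HW : W <= 4 * Z.
  apply: (@leq_trans ((2 * T) * (2 * L) * Cs)).
    by rewrite /W; apply: leq_mul => //; apply: leq_mul; nlia.
  rewrite /Z; nnia.
have HZ : L <= Z.
  rewrite /Z; apply: (@leq_trans (T * L)); first by rewrite leq_pmull.
  by rewrite leq_pmulr.
rewrite /SC; rewrite E1 in HM. nlia.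
Qed.
Lemma INR_muln (a b : nat) : INR (a * b) = (INR a * INR b)%R.
Proof. exact: mult_INR. Qed.
Lemma INR_addn (a b : nat) : INR (a + b) = (INR a + INR b)%R.
Proof. exact: plus_INR. Qed.
Lemma INR_expn2 (k : nat) : INR (expn 2 k) = (2 ^ k)%R.
Proof.
elim: k => [|k IH]; first by rewrite expn0.
by rewrite expnS INR_muln IH /=.
Qed.
Lemma INR_leq (a b : nat) : a <= b -> (INR a <= INR b)%R.
Proof. by move/leP; apply: le_INR. Qed.

Theorem mainTheorem15 :
  exists c : R, (0 < c)%R /\
  forall (n N : nat), 2 <= n -> 1 <= N ->
  forall (G : rel 'I_n) (u v : 'I_N -> 'I_n) (P : 'I_N -> seq (seq 'I_n)),
  valid_game G u v P ->
  forall pstar : 'I_N -> seq 'I_n, optimal P pstar ->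
  forall p : 'I_N -> seq 'I_n, nash P p ->
  (INR (SC p) / INR (SC pstar) <=
     c * (INR (Cmax pstar) * INR (Dmax pstar) /
          (INR (Cmax pstar) + INR (Dmax pstar)))
       * (ln (INR n) / ln 2) ^ 2)%R.
Proof.
exists 122%R; split; first lra.
move=> n N Hn HN G u v P Hv pstar Ho p Hna.
have [HC HL HS] := nat_main Hn HN Hv Ho Hna.
set Cs := Cmax pstar in HC HS *; set L := Dmax pstar in HL HS *.
set T := trunc_log 2 n in HS.
have HT : 1 <= T by apply: trunc_log_max.
have HTn : expn 2 T <= n by apply: trunc_logP => //; apply: ltnW.
have hC : (1 <= INR Cs)%R by apply: (INR_leq HC).
have hL : (1 <= INR L)%R by apply: (INR_leq HL).
have hT1 : (1 <= INR T)%R by apply: (INR_leq HT).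
have hS : (INR (SC p) <= 122 * (INR T * INR L * INR Cs))%R.
  have := INR_leq HS; rewrite !INR_muln.
  have -> : INR 122 = 122%R by rewrite /=; lra.
  done.
have hln2 : (0 < ln 2)%R by have := ln_lt_2; lra.
have hTx : (INR T <= ln (INR n) / ln 2)%R.
  have h2T : (2 ^ T <= INR n)%R by rewrite -INR_expn2; apply: INR_leq.
  have hlog : (INR T * ln 2 <= ln (INR n))%R.
    rewrite -ln_pow; last lra.
    case: (Rle_lt_or_eq_dec _ _ h2T) => h.
      left; apply: ln_increasing => //; apply: pow_lt; lra.
    by rewrite h; right.
  apply: (Rmult_le_reg_r (ln 2)) => //.
  unfold Rdiv; rewrite Rmult_assoc Rinv_l; lra.
set x := (ln (INR n) / ln 2)%R in hTx *.
have hx2 : (INR T <= x ^ 2)%R by nra.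
have hLC : (0 <= INR L * INR Cs)%R by nra.
have hA : (INR (SC p) <= 122 * INR Cs * INR L * x ^ 2)%R by nra.
have -> : INR (SC pstar) = (INR Cs + INR L)%R by rewrite /SC INR_addn.
unfold Rdiv.
have -> : (122 * (INR Cs * INR L * / (INR Cs + INR L)) * x ^ 2 =
           (122 * INR Cs * INR L * x ^ 2) * / (INR Cs + INR L))%R by ring.
apply: Rmult_le_compat_r => //.
left; apply: Rinv_0_lt_compat; lra.
Qed.
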